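(* For parameters $a>0$, $b>0$, $L>0$, call a barrier a pair $(\phi,\psi)$ solving $$-\phi''=\phi(1-\phi-a\psi),\quad -\psi''=\psi(1-b\phi-\psi)\ \text{ in }(0,L),\qquad \phi(0)=\phi(L)=0,\ \psi(0)=\psi(L)=1,$$ with $0<\phi(x)<1$ and $0<\psi(x)<1$ for all $x\in(0,L)$. Suppose a barrier exists for the parameters $\bar a,\bar b,\bar L$ (with $\bar a>0$, $\bar b>\max\{\bar a,1\}$, $\bar L>0$). Then: 1. for all $L\ge\bar L$ a barrier exists for the parameters $\bar a,\bar b,L$; 2. for all $b\ge\bar b$ a barrier exists for the parameters $\bar a,b,\bar L$; 3. for all $a\le\bar a$ (with $a>0$) a barrier exists for the parameters $a,\bar b,\bar L$. *)

(* Defs.v *)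
From Stdlib Require Import Reals.
From Coquelicot Require Import Coquelicot.
Open Scope R_scope.

Definition cont_on_closed (L : R) (f : R -> R) (x : R) : Prop :=
  filterlim f (within (fun y => 0 <= y <= L) (locally x)) (locally (f x)).

Definition is_barrier (a b L : R) (phi psi : R -> R) : Prop :=
  (forall x, 0 <= x <= L -> cont_on_closed L phi x /\ cont_on_closed L psi x) /\
  (forall x, 0 < x < L ->
     ex_derive phi x /\ ex_derive (Derive phi) x /\
     ex_derive psi x /\ ex_derive (Derive psi) x /\
     - Derive (Derive phi) x = phi x * (1 - phi x - a * psi x) /\
     - Derive (Derive psi) x = psi x * (1 - b * phi x - psi x) /\
     0 < phi x < 1 /\ 0 < psi x < 1) /\
  phi 0 = 0 /\ phi L = 0 /\ psi 0 = 1 /\ psi L = 1.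

Definition barrier_exists (a b L : R) : Prop :=
  exists phi psi : R -> R, is_barrier a b L phi psi.

(* Main.v *)
Require Import Defs.
From Stdlib Require Import Reals Lra Psatz.
From Coquelicot Require Import Coquelicot.
Open Scope R_scope.

Definition sh x := (exp x - exp (-x))/2.
Definition ch x := (exp x + exp (-x))/2.

Lemma d_shl k L x : is_derive (fun y => sh (k*(L-y))) x (- k * ch (k*(L-x))).
Proof. unfold sh, ch. auto_derive. auto. unfold Rminus. field. Qed.
Lemma d_sh k x : is_derive (fun y => sh (k*y)) x (k * ch (k*x)).
Proof. unfold sh, ch. auto_derive. auto. field. Qed.
Lemma d_chl k L x : is_derive (fun y => ch (k*(L-y))) x (- k * sh (k*(L-x))).
Proof. unfold sh, ch. auto_derive. auto. unfold Rminus. field. Qed.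
Lemma d_ch k x : is_derive (fun y => ch (k*y)) x (k * sh (k*x)).
Proof. unfold sh, ch. auto_derive. auto. field. Qed.

Lemma der_mul (f g : R -> R) (x a b : R) : is_derive f x a -> is_derive g x b ->
  is_derive (fun t => f t * g t) x (a * g x + f x * b).
Proof. intros Ha Hb. apply (is_derive_mult f g x a b Ha Hb). intros; apply Rmult_comm. Qed.
Lemma der_plus (f g : R -> R) (x a b : R) : is_derive f x a -> is_derive g x b ->
  is_derive (fun t => f t + g t) x (a + b).
Proof. intros Ha Hb. apply (is_derive_plus f g x a b Ha Hb). Qed.
Lemma der_ext (f g : R -> R) (x l : R) : (forall t, f t = g t) -> is_derive f x l -> is_derive g x l.
Proof. intros. apply (is_derive_ext f g); auto. Qed.
Lemma der_eq (f : R -> R) (x a b : R) : is_derive f x a -> a = b -> is_derive f x b.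
Proof. intros H ->; exact H. Qed.

Lemma sh_0 : sh 0 = 0.
Proof. unfold sh. rewrite Ropp_0. lra. Qed.
Lemma sh_pos x : 0 < x -> 0 < sh x.
Proof. intros. unfold sh. assert (exp (-x) < exp x) by (apply exp_increasing; lra). lra. Qed.
Lemma sh_nonneg x : 0 <= x -> 0 <= sh x.
Proof. intros [H|H]. apply Rlt_le, sh_pos; auto. subst; rewrite sh_0; lra. Qed.
Lemma ch_pos x : 0 < ch x.
Proof. unfold ch. pose proof (exp_pos x); pose proof (exp_pos (-x)); lra. Qed.
Lemma sh_le x y : x <= y -> sh x <= sh y.
Proof. intros. unfold sh. assert (exp x <= exp y) by (destruct H; [apply Rlt_le, exp_increasing|subst]; lra).
  assert (exp (-y) <= exp (-x)) by (destruct H; [apply Rlt_le, exp_increasing|subst]; lra). lra. Qed.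
Lemma exp_bound x B : Rabs x <= B -> exp x <= exp B.
Proof. intros. destruct (Rle_lt_or_eq_dec x B). apply Rle_trans with (Rabs x); [apply Rle_abs|auto].
  apply Rlt_le, exp_increasing; auto. subst; lra. Qed.
Lemma sh_bound x B : Rabs x <= B -> Rabs (sh x) <= exp B.
Proof. intros. unfold sh. assert (Rabs (-x) <= B) by (rewrite Rabs_Ropp; auto).
  pose proof (exp_bound _ _ H); pose proof (exp_bound _ _ H0). pose proof (exp_pos x); pose proof (exp_pos (-x)).
  apply Rabs_le; lra. Qed.
Lemma ch_bound x B : Rabs x <= B -> Rabs (ch x) <= exp B.
Proof. intros. unfold ch. assert (Rabs (-x) <= B) by (rewrite Rabs_Ropp; auto).
  pose proof (exp_bound _ _ H); pose proof (exp_bound _ _ H0). pose proof (exp_pos x); pose proof (exp_pos (-x)).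
  apply Rabs_le; lra. Qed.
Lemma sh_add x y : ch x * sh y + ch y * sh x = sh (x + y).
Proof. unfold sh, ch. rewrite !exp_plus, Ropp_plus_distr, exp_plus.
  rewrite !exp_Ropp. pose proof (exp_pos x); pose proof (exp_pos y). field; lra. Qed.

Definition cont_all (f : R -> R) := forall x, continuous f x.
Lemma cont_of_der (f : R -> R) x l : is_derive f x l -> continuous f x.
Proof. intros H. apply (ex_derive_continuous (K:=R_AbsRing) (V:=R_NormedModule)). exists l; exact H. Qed.

Section Green.
Variables (k L : R).
Hypotheses (Hk : 0 < k) (HL : 0 < L).

Definition I1 (f : R -> R) x := RInt (fun y => sh (k*y) * f y) 0 x.
Definition I2 (f : R -> R) x := RInt (fun y => sh (k*(L-y)) * f y) x L.

Definition Tg (al : R) (f : R -> R) x :=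
  al * (sh (k*(L-x)) + sh (k*x)) / sh (k*L)
  + (sh (k*(L-x)) * I1 f x + sh (k*x) * I2 f x) / (k * sh (k*L)).
Definition Dg (al : R) (f : R -> R) x :=
  al * k * (ch (k*x) - ch (k*(L-x))) / sh (k*L)
  + (- k * ch (k*(L-x)) * I1 f x + k * ch (k*x) * I2 f x) / (k * sh (k*L)).

Lemma shkL : 0 < sh (k*L).
Proof. apply sh_pos. nra. Qed.

Lemma cont_g1 f : cont_all f -> cont_all (fun y => sh (k*y) * f y).
Proof. intros Hf x. apply (continuous_mult (fun y => sh (k*y)) f).
  eapply cont_of_der; apply d_sh. apply Hf. Qed.
Lemma cont_g2 f : cont_all f -> cont_all (fun y => sh (k*(L-y)) * f y).
Proof. intros Hf x. apply (continuous_mult (fun y => sh (k*(L-y))) f).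
  eapply cont_of_der; apply d_shl. apply Hf. Qed.

Lemma exR g a b : cont_all g -> ex_RInt g a b.
Proof. intros. apply (ex_RInt_continuous (V:=R_CompleteNormedModule)). intros; apply H. Qed.

Lemma d_I1 f x : cont_all f -> is_derive (I1 f) x (sh (k*x) * f x).
Proof. intros Hf. apply (is_derive_RInt (fun y => sh (k*y) * f y) (I1 f) 0 x).
  apply filter_forall. intros b. apply (RInt_correct (V:=R_CompleteNormedModule)). apply exR, cont_g1, Hf.
  apply cont_g1, Hf. Qed.
Lemma d_I2 f x : cont_all f -> is_derive (I2 f) x (- (sh (k*(L-x)) * f x)).
Proof. intros Hf. apply (is_derive_RInt' (fun y => sh (k*(L-y)) * f y) (I2 f) x L).
  apply filter_forall. intros b. apply (RInt_correct (V:=R_CompleteNormedModule)). apply exR, cont_g2, Hf.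
  apply cont_g2, Hf. Qed.

Lemma d_Tg al f x : cont_all f -> is_derive (Tg al f) x (Dg al f x).
Proof. intros Hf. pose proof shkL. unfold Tg, Dg.
  apply der_plus.
  - apply der_eq with (al / sh (k*L) * (- k * ch (k*(L-x)) + k * ch (k*x))).
    2: field; lra.
    apply (der_ext (fun t => al / sh (k*L) * (sh (k*(L-t)) + sh (k*t)))).
    intros; field; lra.
    apply is_derive_scal. apply der_plus. apply d_shl. apply d_sh.
  - apply der_eq with (/ (k * sh (k*L)) * ((- k * ch (k*(L-x)) * I1 f x + sh (k*(L-x)) * (sh (k*x) * f x))
        + (k * ch (k*x) * I2 f x + sh (k*x) * (- (sh (k*(L-x)) * f x))))).
    2: field; lra.
    apply (der_ext (fun t => / (k * sh (k*L)) * ((sh (k*(L-t)) * I1 f t) + (sh (k*t) * I2 f t)))).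
    intros; field; lra.
    apply is_derive_scal. apply der_plus.
    apply (der_mul (fun t => sh (k*(L-t))) (I1 f)). apply d_shl. apply d_I1; auto.
    apply (der_mul (fun t => sh (k*t)) (I2 f)). apply d_sh. apply d_I2; auto.
Qed.

Lemma d_Dg al f x : cont_all f -> is_derive (Dg al f) x (k*k * Tg al f x - f x).
Proof. intros Hf. pose proof shkL. unfold Tg, Dg.
  apply der_eq with (al * k / sh (k*L) * (k * sh (k*x) - (- k * sh (k*(L-x))))
     + / (k * sh (k*L)) * ((- k * (- k * sh (k*(L-x))) * I1 f x + (- k * ch (k*(L-x))) * (sh (k*x) * f x))
        + (k * (k * sh (k*x)) * I2 f x + k * ch (k*x) * (- (sh (k*(L-x)) * f x))))).
  2: { assert (E1 : (ch (k*x) * sh (k*(L-x)) + ch (k*(L-x)) * sh (k*x)) / sh (k*L) = 1).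
       { rewrite sh_add. replace (k*x + k*(L-x)) with (k*L) by ring. field; lra. }
       transitivity (k*k*(al * (sh (k*(L-x)) + sh (k*x)) / sh (k*L) + (sh (k*(L-x)) * I1 f x + sh (k*x) * I2 f x) / (k * sh (k*L))) - f x * ((ch (k*x) * sh (k*(L-x)) + ch (k*(L-x)) * sh (k*x)) / sh (k*L))).
       field; lra. rewrite E1; ring. }
  apply der_plus.
  - apply (der_ext (fun t => al * k / sh (k*L) * (ch (k*t) - ch (k*(L-t))))).
    intros; field; lra.
    apply is_derive_scal. apply (is_derive_minus (fun t => ch (k*t)) (fun t => ch (k*(L-t)))).
    apply d_ch. apply d_chl.
  - apply (der_ext (fun t => / (k * sh (k*L)) * ((- k * ch (k*(L-t)) * I1 f t) + (k * ch (k*t) * I2 f t)))).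
    intros; field; lra.
    apply is_derive_scal. apply der_plus.
    apply (der_mul (fun t => - k * ch (k*(L-t))) (I1 f)).
    apply (is_derive_scal (fun t => ch (k*(L-t)))). apply d_chl. apply d_I1; auto.
    apply (der_mul (fun t => k * ch (k*t)) (I2 f)).
    apply (is_derive_scal (fun t => ch (k*t))). apply d_ch. apply d_I2; auto.
Qed.

End Green.

Lemma RInt_diff (f g : R -> R) a b : ex_RInt f a b -> ex_RInt g a b ->
  RInt (fun y => f y - g y) a b = RInt f a b - RInt g a b.
Proof. intros. pose proof (RInt_minus (V:=R_CompleteNormedModule) f g a b H H0). exact H1. Qed.

Lemma RInt_ext_R (f g : R -> R) a b : (forall x, f x = g x) -> RInt f a b = RInt g a b.
Proof. intros. apply RInt_ext. intros; auto. Qed.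

Lemma RInt_zero_pt (f : R -> R) a : RInt f a a = 0.
Proof. rewrite (RInt_point (V:=R_CompleteNormedModule)). reflexivity. Qed.

Lemma cont_pt_of (f : R -> R) x : continuous f x -> continuity_pt f x.
Proof. intros. apply continuity_pt_filterlim. exact H. Qed.

Section Green2.
Variables (k L : R).
Hypotheses (Hk : 0 < k) (HL : 0 < L).
Definition e := exp (k*L).

Lemma e_pos : 0 < e. Proof. apply exp_pos. Qed.
Lemma abs_kin y : 0 <= y <= L -> Rabs (k*y) <= k*L.
Proof. intros. rewrite Rabs_pos_eq by nra. nra. Qed.
Lemma abs_kin' y : 0 <= y <= L -> Rabs (k*(L-y)) <= k*L.
Proof. intros. rewrite Rabs_pos_eq by nra. nra. Qed.

Lemma mul_bound a b A B : Rabs a <= A -> Rabs b <= B -> Rabs (a*b) <= A*B.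
Proof. intros. rewrite Rabs_mult. apply Rmult_le_compat; auto; apply Rabs_pos. Qed.

Lemma I1_bound f B x : 0 <= x <= L -> cont_all f -> (forall y, 0 <= y <= L -> Rabs (f y) <= B) ->
  Rabs (I1 k f x) <= L * (e * B).
Proof. intros Hx Hf HB. assert (0 <= B) by (specialize (HB 0); pose proof (Rabs_pos (f 0)); lra).
  unfold I1. eapply Rle_trans. apply abs_RInt_le_const with (M := e*B). lra.
  apply exR. apply cont_g1; auto.
  intros t Ht. apply mul_bound. apply sh_bound. apply abs_kin; lra. apply HB; lra.
  pose proof e_pos. apply Rmult_le_compat_r. nra. lra. Qed.

Lemma I2_bound f B x : 0 <= x <= L -> cont_all f -> (forall y, 0 <= y <= L -> Rabs (f y) <= B) ->
  Rabs (I2 k L f x) <= L * (e * B).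
Proof. intros Hx Hf HB. assert (0 <= B) by (specialize (HB 0); pose proof (Rabs_pos (f 0)); lra).
  unfold I2. eapply Rle_trans. apply abs_RInt_le_const with (M := e*B). lra.
  apply exR. apply cont_g2; auto.
  intros t Ht. apply mul_bound. apply sh_bound. apply abs_kin'; lra. apply HB; lra.
  pose proof e_pos. apply Rmult_le_compat_r. nra. lra. Qed.

Definition Cd al B := (Rabs al * k * (2 * e) + 2 * (e * (L * (e * B)))) / sh (k*L).

Lemma Dg_bound al f B x : 0 <= x <= L -> cont_all f -> (forall y, 0 <= y <= L -> Rabs (f y) <= B) ->
  Rabs (Dg k L al f x) <= Cd al B.
Proof. intros Hx Hf HB. pose proof (shkL k L Hk HL) as Hs. unfold Dg, Cd.
  pose proof (I1_bound f B x Hx Hf HB). pose proof (I2_bound f B x Hx Hf HB).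
  assert (A1: Rabs (ch (k*x)) <= e) by (apply ch_bound, abs_kin; lra).
  assert (A2: Rabs (ch (k*(L-x))) <= e) by (apply ch_bound, abs_kin'; lra).
  replace (al * k * (ch (k * x) - ch (k * (L - x))) / sh (k * L) +
   (- k * ch (k * (L - x)) * I1 k f x + k * ch (k * x) * I2 k L f x) / (k * sh (k * L)))
  with ((al * k * (ch (k * x) - ch (k * (L - x))) + (- ch (k * (L - x)) * I1 k f x + ch (k * x) * I2 k L f x))/ sh (k*L))
  by (field; lra).
  unfold Rdiv. rewrite Rabs_mult. rewrite (Rabs_pos_eq (/ _)) by (apply Rlt_le, Rinv_0_lt_compat; lra).
  apply Rmult_le_compat_r. apply Rlt_le, Rinv_0_lt_compat; lra.
  eapply Rle_trans. apply Rabs_triang. apply Rplus_le_compat.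
  - replace (al * k * (ch (k * x) - ch (k * (L - x)))) with ((al * k) * (ch (k * x) - ch (k * (L - x)))) by ring.
    apply mul_bound. rewrite Rabs_mult, (Rabs_pos_eq k) by lra. lra.
    unfold Rminus. eapply Rle_trans. apply Rabs_triang. rewrite Rabs_Ropp. unfold Rminus in A2. lra.
  - eapply Rle_trans. apply Rabs_triang. replace (2 * (e * (L * (e * B)))) with (e * (L * (e * B)) + e * (L * (e * B))) by ring.
    apply Rplus_le_compat; apply mul_bound; auto. rewrite Rabs_Ropp; auto.
Qed.
End Green2.

Section Green3.
Variables (k L : R).
Hypotheses (Hk : 0 < k) (HL : 0 < L).

Lemma Tg_0 al f : Tg k L al f 0 = al.
Proof. pose proof (shkL k L Hk HL). unfold Tg, I1. rewrite RInt_zero_pt.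
  replace (k*0) with 0 by ring. rewrite sh_0. replace (L-0) with L by ring. field; lra. Qed.
Lemma Tg_L al f : Tg k L al f L = al.
Proof. pose proof (shkL k L Hk HL). unfold Tg, I2. rewrite RInt_zero_pt.
  replace (k*(L-L)) with 0 by ring. rewrite sh_0. field; lra. Qed.

Lemma Tg_sol al f : cont_all f -> forall x,
  ex_derive (Tg k L al f) x /\ ex_derive (Derive (Tg k L al f)) x /\
  Derive (Derive (Tg k L al f)) x = k*k*Tg k L al f x - f x.
Proof. intros Hf x.
  assert (HD : forall t, Derive (Tg k L al f) t = Dg k L al f t).
  { intros t. apply is_derive_unique. apply d_Tg; auto. }
  split. exists (Dg k L al f x). apply d_Tg; auto.
  split. exists (k*k*Tg k L al f x - f x). apply (der_ext (Dg k L al f)). intros; rewrite HD; auto.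
  apply d_Dg; auto.
  rewrite (Derive_ext _ _ x HD). apply is_derive_unique. apply d_Dg; auto.
Qed.

Lemma Tg_cont al f : cont_all f -> cont_all (Tg k L al f).
Proof. intros Hf x. eapply cont_of_der. apply d_Tg; auto. Qed.

Lemma Tg_lip al f B x y : 0 <= x <= L -> 0 <= y <= L -> cont_all f ->
  (forall z, 0 <= z <= L -> Rabs (f z) <= B) ->
  Rabs (Tg k L al f x - Tg k L al f y) <= Cd k L al B * Rabs (x - y).
Proof. intros Hx Hy Hf HB.
  destruct (MVT_gen (Tg k L al f) y x (Dg k L al f)) as [c [Hc Hm]].
  - intros; apply d_Tg; auto.
  - intros; apply cont_pt_of, Tg_cont; auto.
  - rewrite Hm. rewrite Rabs_mult. apply Rmult_le_compat_r. apply Rabs_pos.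
    apply Dg_bound; auto. split.
    + apply Rle_trans with (Rmin y x); [apply Rmin_glb; lra|apply Hc].
    + apply Rle_trans with (Rmax y x); [apply Hc|apply Rmax_lub; lra].
Qed.

Lemma Tg_diff al f g eps x : 0 <= x <= L -> cont_all f -> cont_all g ->
  (forall z, 0 <= z <= L -> Rabs (f z - g z) <= eps) ->
  Rabs (Tg k L al f x - Tg k L al g x) <= 2 * (e k L * (L * (e k L * eps))) / (k * sh (k*L)).
Proof. intros Hx Hf Hg He. pose proof (shkL k L Hk HL).
  assert (Hfg : cont_all (fun z => f z - g z)).
  { intros z. apply (continuous_minus (V:=R_NormedModule) f g); auto. }
  assert (E1 : I1 k f x - I1 k g x = I1 k (fun z => f z - g z) x).
  { unfold I1. rewrite <- RInt_diff. apply RInt_ext_R. intros; ring.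
    apply exR, cont_g1; auto. apply exR, cont_g1; auto. }
  assert (E2 : I2 k L f x - I2 k L g x = I2 k L (fun z => f z - g z) x).
  { unfold I2. rewrite <- RInt_diff. apply RInt_ext_R. intros; ring.
    apply exR, cont_g2; auto. apply exR, cont_g2; auto. }
  replace (Tg k L al f x - Tg k L al g x) with
    ((sh (k*(L-x)) * (I1 k f x - I1 k g x) + sh (k*x) * (I2 k L f x - I2 k L g x)) / (k * sh (k*L)))
    by (unfold Tg; field; lra).
  rewrite E1, E2. unfold Rdiv. rewrite Rabs_mult.
  rewrite (Rabs_pos_eq (/ _)) by (apply Rlt_le, Rinv_0_lt_compat; nra).
  apply Rmult_le_compat_r. apply Rlt_le, Rinv_0_lt_compat; nra.
  eapply Rle_trans. apply Rabs_triang.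
  replace (2 * (e k L * (L * (e k L * eps)))) with (e k L * (L * (e k L * eps)) + e k L * (L * (e k L * eps))) by ring.
  apply Rplus_le_compat; apply mul_bound.
  apply sh_bound, abs_kin'; auto. apply I1_bound; auto.
  apply sh_bound, abs_kin; auto. apply I2_bound; auto.
Qed.
End Green3.

Lemma compare (M c d : R) (u v : R -> R) : 0 < M -> c < d ->
 (forall x, c <= x <= d -> continuous u x /\ continuous v x) ->
 (forall x, c < x < d -> ex_derive u x /\ ex_derive (Derive u) x /\ ex_derive v x /\
     ex_derive (Derive v) x /\ M * v x - Derive (Derive v) x <= M * u x - Derive (Derive u) x) ->
 v c <= u c -> v d <= u d -> forall x, c <= x <= d -> v x <= u x.
Proof.
  intros HM Hcd Hc Hd Hvc Hvd.
  set (w := fun t => u t - v t).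
  set (g := fun t => Derive u t - Derive v t).
  assert (Hwd : forall t, c < t < d -> derivable_pt_lim w t (g t)).
  { intros t Ht. apply is_derive_Reals. destruct (Hd t Ht) as [H1 [_ [H3 _]]].
    apply (is_derive_minus (V:=R_NormedModule) u v); apply Derive_correct; auto. }
  destruct (continuity_ab_min w c d) as [x0 [Hmin Hx0]]. lra.
  { intros t Ht. apply cont_pt_of. destruct (Hc t Ht).
    apply (continuous_minus (V:=R_NormedModule) u v); auto. }
  intros x Hx. apply Rnot_lt_le. intros Hlt.
  assert (Hw0 : w x0 < 0). { specialize (Hmin x Hx). unfold w in *. lra. }
  assert (Hx0i : c < x0 < d).
  { split; apply Rnot_le_lt; intros Hle.
    - assert (x0 = c) by lra. subst. unfold w in Hw0; lra.
    - assert (x0 = d) by lra. subst. unfold w in Hw0; lra. }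
  destruct (Hd x0 Hx0i) as [Hu1 [Hu2 [Hv1 [Hv2 Hineq]]]].
  assert (Hg0 : g x0 = 0).
  { set (pr := exist (fun l => derivable_pt_lim w x0 l) (g x0) (Hwd x0 Hx0i) : derivable_pt w x0).
    pose proof (deriv_minimum w c d x0 pr (proj1 Hx0i) (proj2 Hx0i)) as HH.
    assert (forall t, c < t -> t < d -> w x0 <= w t) by (intros; apply Hmin; lra).
    specialize (HH H). exact HH. }
  set (D := Derive (Derive u) x0 - Derive (Derive v) x0).
  assert (HD : D < 0). { unfold D. unfold w in Hw0. nra. }
  assert (Hgd : derivable_pt_lim g x0 D).
  { apply is_derive_Reals. unfold g, D.
    apply (is_derive_minus (V:=R_NormedModule) (Derive u) (Derive v)); apply Derive_correct; auto. }
  destruct (Hgd (-D/2)) as [del Hdel]. lra.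
  set (h := Rmin (del/2) ((d - x0)/2)).
  assert (Hh : 0 < h). { unfold h. apply Rmin_pos. destruct del; simpl; lra. lra. }
  assert (Hh1 : h < del). { unfold h. eapply Rle_lt_trans. apply Rmin_l. destruct del; simpl; lra. }
  assert (Hh2 : x0 + h < d). { assert (h <= (d-x0)/2) by apply Rmin_r. lra. }
  destruct (MVT_cor2 w g x0 (x0 + h)) as [xi [Hxi1 Hxi2]]. lra.
  { intros t Ht. apply Hwd. lra. }
  assert (Hgxi : g xi < 0).
  { set (hh := xi - x0). assert (0 < hh) by (unfold hh; lra).
    specialize (Hdel hh). assert (hh <> 0) by lra. assert (Rabs hh < del).
    { rewrite Rabs_pos_eq by lra. unfold hh; lra. }
    specialize (Hdel H0 H1). rewrite Hg0 in Hdel. replace (x0 + hh) with xi in Hdel by (unfold hh; ring).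
    apply Rabs_lt_between in Hdel. destruct Hdel as [_ Hdel].
    assert ((g xi - 0) / hh < D/2) by lra.
    apply Rnot_le_lt. intros Hge. assert (0 <= (g xi - 0)/hh).
    { unfold Rdiv. apply Rmult_le_pos. lra. apply Rlt_le, Rinv_0_lt_compat; lra. }
    lra. }
  assert (w (x0 + h) < w x0) by nra.
  specialize (Hmin (x0 + h)). lra.
Qed.

Lemma lim_eps (u : nat -> R) (l eps : R) : is_lim_seq u l -> 0 < eps ->
  exists N, forall n, (N <= n)%nat -> Rabs (u n - l) < eps.
Proof. intros H He. pose proof (proj1 (is_lim_seq_Reals u l) H) as H1. destruct (H1 eps He) as [N HN].
  exists N. intros n Hn. apply HN. lia. Qed.

Lemma unif (e : nat -> R -> R) L C : 0 < L -> 0 <= C ->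
 (forall n x y, 0<=x<=L -> 0<=y<=L -> e n x <= e n y + C * Rabs (x - y)) ->
 (forall x, 0<=x<=L -> is_lim_seq (fun n => e n x) 0) ->
 forall eps, 0<eps -> exists N, forall n x, (N <= n)%nat -> 0<=x<=L -> e n x <= eps.
Proof.
  intros HL HC Hlip Hlim eps He.
  set (del := eps / (2 * (C+1))).
  assert (Hdel : 0 < del) by (unfold del; apply Rdiv_lt_0_compat; lra).
  assert (HCd : C * del <= eps/2).
  { unfold del. apply Rmult_le_reg_r with (2*(C+1)). lra.
    field_simplify; try lra. }
  assert (Hpt : forall g, 0 <= g <= L -> exists N, forall n, (N <= n)%nat -> e n g < eps/2).
  { intros g Hg. destruct (lim_eps _ _ (eps/2) (Hlim g Hg)) as [N HN]. lra.
    exists N. intros n Hn. specialize (HN n Hn). apply Rabs_lt_between in HN. lra. }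
  assert (Hj : forall j, exists N, forall n x, (N <= n)%nat -> 0<=x<=L -> x <= INR j * del -> e n x <= eps).
  { induction j.
    - destruct (Hpt 0) as [N HN]. lra. exists N. intros n x Hn Hx Hxj. simpl in Hxj.
      assert (x = 0) by lra. subst. specialize (HN n Hn). lra.
    - destruct IHj as [N1 H1].
      set (g := Rmin (INR (S j) * del) L).
      assert (Hg : 0 <= g <= L).
      { unfold g. split. apply Rmin_glb. apply Rmult_le_pos. apply pos_INR. lra. lra. apply Rmin_r. }
      destruct (Hpt g Hg) as [N2 H2]. exists (Nat.max N1 N2). intros n x Hn Hx Hxj.
      destruct (Rle_or_lt x (INR j * del)) as [Hle|Hgt].
      + apply H1; auto. lia.
      + assert (Hxg : x <= g). { unfold g. apply Rmin_glb; lra. }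
        assert (Hgx : g - x <= del). { unfold g. rewrite S_INR in *.
          assert (Rmin ((INR j + 1) * del) L <= (INR j + 1) * del) by apply Rmin_l. nra. }
        specialize (Hlip n x g Hx Hg). specialize (H2 n ltac:(lia)).
        rewrite Rabs_left1 in Hlip by lra.
        assert (C * - (x - g) <= C * del) by (apply Rmult_le_compat_l; lra).
        lra. }
  destruct (archimed_cor1 (del / L)) as [M [HM1 HM2]]. apply Rdiv_lt_0_compat; lra.
  destruct (Hj M) as [N HN]. exists N. intros n x Hn Hx. apply HN; auto.
  assert (0 < INR M) by (apply lt_0_INR; lia).
  assert (L < INR M * del).
  { apply Rmult_lt_reg_r with (/ INR M). apply Rinv_0_lt_compat; auto.
    apply Rmult_lt_reg_l with (/ L). apply Rinv_0_lt_compat; auto.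
    field_simplify; try lra. }
  lra.
Qed.

Definition good (M : R) (u f : R -> R) :=
  forall x, is_derive u x (Derive u x) /\ is_derive (Derive u) x (M * u x - f x).

Lemma good_intro M (u du f : R -> R) : (forall x, is_derive u x (du x)) ->
  (forall x, is_derive du x (M * u x - f x)) -> good M u f.
Proof. intros H1 H2 x. assert (HD : forall t, Derive u t = du t) by (intros; apply is_derive_unique; auto).
  split. rewrite HD; auto. apply (der_ext du). intros; rewrite HD; auto. auto. Qed.

Lemma good_cont M u f : good M u f -> cont_all u.
Proof. intros H x. eapply cont_of_der. apply (H x). Qed.

Lemma good_Tg k L al f : 0 < k -> 0 < L -> cont_all f -> good (k*k) (Tg k L al f) f.
Proof. intros. apply good_intro with (Dg k L al f). intros; apply d_Tg; auto. intros; apply d_Dg; auto. Qed.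

Lemma good_const M r : good M (fun _ => r) (fun _ => M * r).
Proof. apply good_intro with (fun _ => 0). intros; apply (is_derive_const (K:=R_AbsRing) (V:=R_NormedModule)).
  intros. apply der_eq with 0. apply (is_derive_const (K:=R_AbsRing) (V:=R_NormedModule)). ring. Qed.

Lemma good_comb M u f w g s : good M u f -> good M w g ->
  good M (fun x => u x + s * w x) (fun x => f x + s * g x).
Proof. intros Hu Hw. apply good_intro with (fun x => Derive u x + s * Derive w x).
  - intros x. apply der_plus. apply Hu. apply is_derive_scal. apply Hw.
  - intros x. apply der_eq with ((M * u x - f x) + s * (M * w x - g x)).
    apply der_plus. apply Hu. apply is_derive_scal. apply Hw. ring. Qed.

Lemma good_h k L : good (k*k) (fun x => sh (k*x) + sh (k*(L-x))) (fun _ => 0).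
Proof. apply good_intro with (fun x => k * ch (k*x) + - k * ch (k*(L-x))).
  intros x. apply der_plus. apply d_sh. apply d_shl.
  intros x. apply der_eq with (k * (k * sh (k*x)) + - k * (- k * sh (k*(L-x)))).
  apply der_plus; apply is_derive_scal. apply d_ch. apply d_chl. ring. Qed.

Lemma good_h2 k L : good (k*k) (fun x => sh (k*(L-x))) (fun _ => 0).
Proof. apply good_intro with (fun x => - k * ch (k*(L-x))).
  intros x. apply d_shl.
  intros x. apply der_eq with (- k * (- k * sh (k*(L-x)))).
  apply is_derive_scal. apply d_chl. ring. Qed.

Lemma compare_good M c d u f v g : 0 < M -> c < d -> good M u f -> good M v g ->
  (forall x, c < x < d -> g x <= f x) -> v c <= u c -> v d <= u d ->
  forall x, c <= x <= d -> v x <= u x.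
Proof. intros HM Hcd Hu Hv Hfg Hc Hd. apply (compare M c d u v); auto.
  intros x _. split; [eapply good_cont; eauto | eapply good_cont; eauto].
  intros x Hx. destruct (Hu x) as [Hu1 Hu2]. destruct (Hv x) as [Hv1 Hv2].
  repeat split; try (eexists; eauto).
  rewrite (is_derive_unique _ _ _ Hu2), (is_derive_unique _ _ _ Hv2). specialize (Hfg x Hx). lra. Qed.

Definition clamp (L x : R) := Rmax 0 (Rmin L x).

Lemma clamp_in L x : 0 <= L -> 0 <= clamp L x <= L.
Proof. intros. unfold clamp, Rmax, Rmin. repeat destruct Rle_dec; lra. Qed.
Lemma clamp_id L x : 0 <= x <= L -> clamp L x = x.
Proof. intros. unfold clamp, Rmax, Rmin. repeat destruct Rle_dec; lra. Qed.
Lemma clamp_lip L x y : 0 <= L -> Rabs (clamp L x - clamp L y) <= Rabs (x - y).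
Proof. intros. pose proof (Rle_abs (x-y)). pose proof (Rle_abs (-(x-y))). rewrite Rabs_Ropp in H1.
  unfold clamp, Rmax, Rmin. repeat destruct Rle_dec; apply Rabs_le; lra. Qed.

Lemma ball_R (x y eps : R) : Rabs (y - x) < eps -> ball x eps y.
Proof. intros. exact H. Qed.
Lemma ball_R' (x y eps : R) : ball x eps y -> Rabs (y - x) < eps.
Proof. intros. exact H. Qed.

Lemma clamp_cont L f x : 0 <= L -> (forall y, 0 <= y <= L -> cont_on_closed L f y) ->
  continuous (fun y => f (clamp L y)) x.
Proof. intros HL Hf. set (c := clamp L x). specialize (Hf c (clamp_in L x HL)).
  intros P HP. specialize (Hf P HP). destruct Hf as [eps He].
  exists eps. intros y Hy. apply He. apply ball_R. apply ball_R' in Hy.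
  eapply Rle_lt_trans. apply clamp_lip; auto. exact Hy. apply clamp_in; auto. Qed.

Lemma cont_closed_of L f x : continuous f x -> cont_on_closed L f x.
Proof. intros H P HP. specialize (H P HP). unfold within. unfold filtermap in *.
  apply (filter_imp (fun y => P (f y))); auto. Qed.

Lemma transfer (f g : R -> R) c d : (forall y, c < y < d -> f y = g y) -> forall x, c < x < d ->
  ex_derive g x -> ex_derive (Derive g) x ->
  ex_derive f x /\ ex_derive (Derive f) x /\ Derive (Derive f) x = Derive (Derive g) x.
Proof. intros Heq x Hx H1 H2.
  assert (Hloc : forall t, c < t < d -> locally t (fun y => g y = f y)).
  { intros t Ht. apply (locally_interval _ t c d); simpl; try lra. intros; symmetry; apply Heq; lra. }
  assert (HD : locally x (fun t => Derive g t = Derive f t)).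
  { apply (locally_interval _ x c d); simpl; try lra. intros y Hy1 Hy2.
    apply Derive_ext_loc. apply Hloc; lra. }
  split. apply (ex_derive_ext_loc g f); auto. split.
  apply (ex_derive_ext_loc (Derive g) (Derive f)); auto.
  symmetry. apply Derive_ext_loc. auto. Qed.

Lemma lip_cont (f : R -> R) C : 0 <= C -> (forall x y, Rabs (f x - f y) <= C * Rabs (x - y)) -> cont_all f.
Proof. intros HC H x. apply continuity_pt_filterlim. intros eps Heps.
  exists (eps / (C + 1)). split. apply Rdiv_lt_0_compat; lra.
  intros y [_ Hy]. simpl in *. unfold R_dist in *. eapply Rle_lt_trans. apply H.
  apply Rle_lt_trans with (C * (eps / (C+1))). apply Rmult_le_compat_l; lra.
  apply Rmult_lt_reg_r with (C+1). lra. field_simplify; lra. Qed.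

Lemma cmul (f g : R -> R) x : continuous f x -> continuous g x -> continuous (fun y => f y * g y) x.
Proof. intros. apply (continuous_mult (K:=R_AbsRing) f g); auto. Qed.
Lemma cadd (f g : R -> R) x : continuous f x -> continuous g x -> continuous (fun y => f y + g y) x.
Proof. intros. apply (continuous_plus (V:=R_NormedModule) f g); auto. Qed.
Lemma cconst (r x : R) : continuous (fun _ => r) x.
Proof. apply (continuous_const (U:=R_UniformSpace) (V:=R_UniformSpace)). Qed.

Lemma csub (f g : R -> R) x : continuous f x -> continuous g x -> continuous (fun y => f y - g y) x.
Proof. intros. apply (continuous_minus (V:=R_NormedModule) f g); auto. Qed.

Definition lower (a b L' : R) (phib psib : R -> R) : Prop :=
  (forall x, 0 <= x <= L' -> cont_on_closed L' phib x /\ cont_on_closed L' psib x) /\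
  (forall x, 0 < x < L' -> ex_derive phib x /\ ex_derive (Derive phib) x /\
     ex_derive psib x /\ ex_derive (Derive psib) x /\
     - Derive (Derive phib) x <= phib x * (1 - phib x - a * psib x) /\
     psib x * (1 - b * phib x - psib x) <= - Derive (Derive psib) x /\
     0 < phib x < 1 /\ 0 < psib x < 1) /\
  phib 0 = 0 /\ phib L' = 0 /\ psib 0 = 1 /\ psib L' = 1.

Section Main.
Variables (a b L L' : R) (phib psib : R -> R).
Hypotheses (Ha : 0 < a) (Hb : 0 < b) (HL' : 0 < L') (HLL : L' <= L) (Hlow : lower a b L' phib psib).

Definition kk := 2 + a + b.
Definition MM := kk * kk.
Definition FF p q := p * (1 - p - a*q) + MM * p.
Definition GG p q := q * (1 - b*p - q) + MM * q.

Lemma HL : 0 < L. Proof. lra. Qed.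
Lemma kk_pos : 0 < kk. Proof. unfold kk; lra. Qed.
Lemma MM_ge : a + b + 2 <= MM. Proof. unfold MM, kk. nra. Qed.
Lemma MM_pos : 0 < MM. Proof. pose proof MM_ge; lra. Qed.

Lemma F_mono p q p' q' : 0 <= p <= p' -> p' <= 1 -> 0 <= q' <= q -> q <= 1 -> FF p q <= FF p' q'.
Proof. intros. pose proof MM_ge.
  assert (E : FF p' q' - FF p q = (p'-p)*(1+MM-p-p'-a*q') + a*p*(q-q')) by (unfold FF; ring).
  assert (0 <= (p'-p)*(1+MM-p-p'-a*q')) by (apply Rmult_le_pos; nra).
  assert (0 <= a*p*(q-q')) by (apply Rmult_le_pos; nra). lra. Qed.
Lemma G_mono p q p' q' : 0 <= q <= q' -> q' <= 1 -> 0 <= p' <= p -> p <= 1 -> GG p q <= GG p' q'.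
Proof. intros. pose proof MM_ge.
  assert (E : GG p' q' - GG p q = (q'-q)*(1+MM-q-q'-b*p') + b*q*(p-p')) by (unfold GG; ring).
  assert (0 <= (q'-q)*(1+MM-q-q'-b*p')) by (apply Rmult_le_pos; nra).
  assert (0 <= b*q*(p-p')) by (apply Rmult_le_pos; nra). lra. Qed.
Lemma F_bnd p q : 0 <= p <= 1 -> 0 <= q <= 1 -> 0 <= FF p q <= MM.
Proof. intros. split.
  replace 0 with (FF 0 q) by (unfold FF; ring). apply F_mono; lra.
  replace MM with (FF 1 0) by (unfold FF; ring). apply F_mono; lra. Qed.
Lemma G_bnd p q : 0 <= p <= 1 -> 0 <= q <= 1 -> 0 <= GG p q <= MM.
Proof. intros. split.
  replace 0 with (GG p 0) by (unfold GG; ring). apply G_mono; lra.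
  replace MM with (GG 0 1) by (unfold GG; ring). apply G_mono; lra. Qed.

Definition KF := 3 + MM + a + b.
Lemma F_lip p q p' q' : 0 <= p <= 1 -> 0 <= q <= 1 -> 0 <= p' <= 1 -> 0 <= q' <= 1 ->
  Rabs (FF p q - FF p' q') <= KF * (Rabs (p - p') + Rabs (q - q')).
Proof. intros. pose proof MM_pos. unfold KF.
  replace (FF p q - FF p' q') with ((p-p')*(1+MM-p-p'-a*q) + (- a*p')*(q-q')) by (unfold FF; ring).
  eapply Rle_trans. apply Rabs_triang.
  assert (Rabs (1+MM-p-p'-a*q) <= 3 + MM + a + b) by (apply Rabs_le; nra).
  assert (Rabs (- a*p') <= 3 + MM + a + b) by (apply Rabs_le; nra).
  assert (H9 : Rabs ((p-p')*(1+MM-p-p'-a*q)) <= Rabs (p-p') * (3 + MM + a + b)) by (rewrite Rabs_mult; apply Rmult_le_compat_l; [apply Rabs_pos|auto]).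
  assert (H10 : Rabs ((- a*p')*(q-q')) <= (3 + MM + a + b) * Rabs (q-q')) by (rewrite Rabs_mult; apply Rmult_le_compat_r; [apply Rabs_pos|auto]).
  lra. Qed.
Lemma G_lip p q p' q' : 0 <= p <= 1 -> 0 <= q <= 1 -> 0 <= p' <= 1 -> 0 <= q' <= 1 ->
  Rabs (GG p q - GG p' q') <= KF * (Rabs (p - p') + Rabs (q - q')).
Proof. intros. pose proof MM_pos. unfold KF.
  replace (GG p q - GG p' q') with ((q-q')*(1+MM-q-q'-b*p) + (- b*q')*(p-p')) by (unfold GG; ring).
  eapply Rle_trans. apply Rabs_triang.
  assert (Rabs (1+MM-q-q'-b*p) <= 3 + MM + a + b) by (apply Rabs_le; nra).
  assert (Rabs (- b*q') <= 3 + MM + a + b) by (apply Rabs_le; nra).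
  assert (H9 : Rabs ((q-q')*(1+MM-q-q'-b*p)) <= Rabs (q-q') * (3 + MM + a + b)) by (rewrite Rabs_mult; apply Rmult_le_compat_l; [apply Rabs_pos|auto]).
  assert (H10 : Rabs ((- b*q')*(p-p')) <= (3 + MM + a + b) * Rabs (p-p')) by (rewrite Rabs_mult; apply Rmult_le_compat_r; [apply Rabs_pos|auto]).
  lra. Qed.

Lemma cont_FF (p q : R -> R) : cont_all p -> cont_all q -> cont_all (fun x => FF (p x) (q x)).
Proof. intros Hp Hq x. unfold FF. apply cadd. apply cmul. auto. apply csub. apply csub. apply cconst. auto.
  apply cmul. apply cconst. auto. apply cmul. apply cconst. auto. Qed.
Lemma cont_GG (p q : R -> R) : cont_all p -> cont_all q -> cont_all (fun x => GG (p x) (q x)).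
Proof. intros Hp Hq x. unfold GG. apply cadd. apply cmul. auto. apply csub. apply csub. apply cconst.
  apply cmul. apply cconst. auto. auto.
  apply cmul. apply cconst. auto. Qed.

Fixpoint it (n : nat) : (R -> R) * (R -> R) :=
  match n with
  | O => (fun _ => 1, fun _ => 0)
  | S m => (Tg kk L 0 (fun x => FF (fst (it m) x) (snd (it m) x)),
            Tg kk L 1 (fun x => GG (fst (it m) x) (snd (it m) x)))
  end.
Definition pn n := fst (it n).
Definition qn n := snd (it n).
Lemma pn_S n : pn (S n) = Tg kk L 0 (fun x => FF (pn n x) (qn n x)). Proof. reflexivity. Qed.
Lemma qn_S n : qn (S n) = Tg kk L 1 (fun x => GG (pn n x) (qn n x)). Proof. reflexivity. Qed.

Lemma cont_it n : cont_all (pn n) /\ cont_all (qn n).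
Proof. induction n. split; intros x; apply cconst.
  destruct IHn. rewrite pn_S, qn_S. split; apply Tg_cont; try apply kk_pos; try apply HL.
  apply cont_FF; auto. apply cont_GG; auto. Qed.

Lemma good_p n : good MM (pn (S n)) (fun x => FF (pn n x) (qn n x)).
Proof. rewrite pn_S. apply good_Tg. apply kk_pos. apply HL. apply cont_FF; apply cont_it. Qed.
Lemma good_q n : good MM (qn (S n)) (fun x => GG (pn n x) (qn n x)).
Proof. rewrite qn_S. apply good_Tg. apply kk_pos. apply HL. apply cont_GG; apply cont_it. Qed.

Lemma pS0 n : pn (S n) 0 = 0. Proof. rewrite pn_S. apply Tg_0. apply kk_pos. apply HL. Qed.
Lemma pSL n : pn (S n) L = 0. Proof. rewrite pn_S. apply Tg_L. apply kk_pos. apply HL. Qed.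
Lemma qS0 n : qn (S n) 0 = 1. Proof. rewrite qn_S. apply Tg_0. apply kk_pos. apply HL. Qed.
Lemma qSL n : qn (S n) L = 1. Proof. rewrite qn_S. apply Tg_L. apply kk_pos. apply HL. Qed.

Definition Ainv n := forall x, 0 <= x <= L -> 0 <= pn n x <= 1 /\ 0 <= qn n x <= 1.

Lemma A_all n : Ainv n.
Proof. induction n.
  - intros x _. unfold pn, qn; simpl. lra.
  - pose proof MM_pos as HM. pose proof HL as HL0. intros x Hx. repeat split.
    + apply (compare_good MM 0 L (pn (S n)) _ (fun _ => 0) (fun _ => MM * 0) HM HL0 (good_p n) (good_const MM 0)); auto.
      intros y Hy. destruct (IHn y ltac:(lra)). pose proof (F_bnd _ _ H H0). lra.
      rewrite pS0; lra. rewrite pSL; lra.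
    + apply (compare_good MM 0 L (fun _ => 1) (fun _ => MM * 1) (pn (S n)) _ HM HL0 (good_const MM 1) (good_p n)); auto.
      intros y Hy. destruct (IHn y ltac:(lra)). pose proof (F_bnd _ _ H H0). lra.
      rewrite pS0; lra. rewrite pSL; lra.
    + apply (compare_good MM 0 L (qn (S n)) _ (fun _ => 0) (fun _ => MM * 0) HM HL0 (good_q n) (good_const MM 0)); auto.
      intros y Hy. destruct (IHn y ltac:(lra)). pose proof (G_bnd _ _ H H0). lra.
      rewrite qS0; lra. rewrite qSL; lra.
    + apply (compare_good MM 0 L (fun _ => 1) (fun _ => MM * 1) (qn (S n)) _ HM HL0 (good_const MM 1) (good_q n)); auto.
      intros y Hy. destruct (IHn y ltac:(lra)). pose proof (G_bnd _ _ H H0). lra.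
      rewrite qS0; lra. rewrite qSL; lra.
Qed.

Definition Cinv n := forall x, 0 <= x <= L -> pn (S n) x <= pn n x /\ qn n x <= qn (S n) x.

Lemma C_all n : Cinv n.
Proof. pose proof MM_pos as HM. pose proof HL as HL0. induction n.
  - intros x Hx. destruct (A_all 1 x Hx). unfold pn, qn in *; simpl in *. lra.
  - intros x Hx. split.
    + apply (compare_good MM 0 L (pn (S n)) _ (pn (S (S n))) _ HM HL0 (good_p n) (good_p (S n))); auto.
      intros y Hy. destruct (IHn y ltac:(lra)). destruct (A_all n y ltac:(lra)). destruct (A_all (S n) y ltac:(lra)).
      apply F_mono; lra.
      rewrite !pS0; lra. rewrite !pSL; lra.
    + apply (compare_good MM 0 L (qn (S (S n))) _ (qn (S n)) _ HM HL0 (good_q (S n)) (good_q n)); auto.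
      intros y Hy. destruct (IHn y ltac:(lra)). destruct (A_all n y ltac:(lra)). destruct (A_all (S n) y ltac:(lra)).
      apply G_mono; lra.
      rewrite !qS0; lra. rewrite !qSL; lra.
Qed.

Lemma box_b x : 0 <= x <= L' -> 0 <= phib x <= 1 /\ 0 <= psib x <= 1.
Proof. intros Hx. destruct Hlow as [_ [Hi [H0 [H1 [H2 H3]]]]].
  destruct (Req_dec x 0) as [->|Hx0]. rewrite H0, H2; lra.
  destruct (Req_dec x L') as [->|HxL]. rewrite H1, H3; lra.
  destruct (Hi x ltac:(lra)) as [_ [_ [_ [_ [_ [_ [? ?]]]]]]]. lra. Qed.

Definition phit := fun y => phib (clamp L' y).
Definition psit := fun y => psib (clamp L' y).
Lemma phit_eq y : 0 <= y <= L' -> phit y = phib y.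
Proof. intros. unfold phit. rewrite clamp_id; auto. Qed.
Lemma psit_eq y : 0 <= y <= L' -> psit y = psib y.
Proof. intros. unfold psit. rewrite clamp_id; auto. Qed.

Definition Binv n := forall x, 0 <= x <= L' -> phib x <= pn n x /\ qn n x <= psib x.

Lemma B_all n : Binv n.
Proof. pose proof MM_pos as HM. destruct Hlow as [Hc [Hi [H0 [H1 [H2 H3]]]]].
  induction n.
  - intros x Hx. destruct (box_b x Hx). unfold pn, qn; simpl. lra.
  - intros x Hx. split.
    + rewrite <- phit_eq by auto.
      apply (compare MM 0 L' (pn (S n)) phit HM HL'); auto.
      * intros y Hy. split. eapply good_cont. apply good_p. apply clamp_cont. lra.
        intros z Hz; apply (Hc z Hz).
      * intros y Hy. destruct (good_p n y) as [G1 G2].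
        destruct (Hi y Hy) as [D1 [D2 [_ [_ [Hphi [_ [Hb1 Hb2]]]]]]].
        destruct (transfer phit phib 0 L' (fun z Hz => phit_eq z ltac:(lra)) y Hy D1 D2) as [T1 [T2 T3]].
        split. eexists; exact G1. split. eexists; exact G2. split. exact T1. split. exact T2.
        rewrite T3, (is_derive_unique _ _ _ G2), phit_eq by lra.
        destruct (IHn y ltac:(lra)). destruct (A_all n y ltac:(lra)).
        assert (FF (phib y) (psib y) <= FF (pn n y) (qn n y)) by (apply F_mono; lra).
        unfold FF in *. lra.
      * rewrite phit_eq by lra. rewrite H0, pS0. lra.
      * rewrite phit_eq by lra. rewrite H1. destruct (A_all (S n) L' ltac:(lra)). lra.
    + rewrite <- psit_eq by auto.
      apply (compare MM 0 L' psit (qn (S n)) HM HL'); auto.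
      * intros y Hy. split. apply clamp_cont. lra.
        intros z Hz; apply (Hc z Hz). eapply good_cont. apply good_q.
      * intros y Hy. destruct (good_q n y) as [G1 G2].
        destruct (Hi y Hy) as [_ [_ [D1 [D2 [_ [Hpsi [Hb1 Hb2]]]]]]].
        destruct (transfer psit psib 0 L' (fun z Hz => psit_eq z ltac:(lra)) y Hy D1 D2) as [T1 [T2 T3]].
        split. exact T1. split. exact T2. split. eexists; exact G1. split. eexists; exact G2.
        rewrite T3, (is_derive_unique _ _ _ G2), psit_eq by lra.
        destruct (IHn y ltac:(lra)). destruct (A_all n y ltac:(lra)).
        assert (GG (pn n y) (qn n y) <= GG (phib y) (psib y)) by (apply G_mono; lra).
        unfold GG in *. lra.
      * rewrite psit_eq by lra. rewrite H2, qS0. lra.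
      * rewrite psit_eq by lra. rewrite H3. destruct (A_all (S n) L' ltac:(lra)). lra.
Qed.

Lemma Cd_nonneg al B : 0 <= B -> 0 <= Cd kk L al B.
Proof. intros. pose proof (shkL kk L kk_pos HL). pose proof (e_pos kk L). pose proof HL. pose proof kk_pos.
  unfold Cd. apply Rmult_le_pos. 2: apply Rlt_le, Rinv_0_lt_compat; auto.
  pose proof (Rabs_pos al). apply Rplus_le_le_0_compat. apply Rmult_le_pos. nra. lra.
  apply Rmult_le_pos. lra. apply Rmult_le_pos. lra. apply Rmult_le_pos; nra. Qed.

Definition C0 := Cd kk L 0 MM + Cd kk L 1 MM.
Lemma C0_nonneg : 0 <= C0.
Proof. pose proof MM_pos. unfold C0. pose proof (Cd_nonneg 0 MM). pose proof (Cd_nonneg 1 MM). lra. Qed.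

Lemma p_lip n x y : 0 <= x <= L -> 0 <= y <= L -> Rabs (pn n x - pn n y) <= C0 * Rabs (x - y).
Proof. intros Hx Hy. pose proof C0_nonneg. pose proof (Rabs_pos (x-y)). destruct n.
  - unfold pn; simpl. replace (1-1) with 0 by ring. rewrite Rabs_R0. nra.
  - rewrite pn_S. eapply Rle_trans. apply Tg_lip with (B := MM); auto. apply kk_pos. apply HL.
    apply cont_FF; apply cont_it.
    intros z Hz. destruct (A_all n z Hz). pose proof (F_bnd _ _ H1 H2). rewrite Rabs_pos_eq; lra.
    apply Rmult_le_compat_r; auto. unfold C0. pose proof (Cd_nonneg 1 MM). pose proof MM_pos. lra. Qed.
Lemma q_lip n x y : 0 <= x <= L -> 0 <= y <= L -> Rabs (qn n x - qn n y) <= C0 * Rabs (x - y).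
Proof. intros Hx Hy. pose proof C0_nonneg. pose proof (Rabs_pos (x-y)). destruct n.
  - unfold qn; simpl. replace (0-0) with 0 by ring. rewrite Rabs_R0. nra.
  - rewrite qn_S. eapply Rle_trans. apply Tg_lip with (B := MM); auto. apply kk_pos. apply HL.
    apply cont_GG; apply cont_it.
    intros z Hz. destruct (A_all n z Hz). pose proof (G_bnd _ _ H1 H2). rewrite Rabs_pos_eq; lra.
    apply Rmult_le_compat_r; auto. unfold C0. pose proof (Cd_nonneg 0 MM). pose proof MM_pos. lra. Qed.

Definition pl x := real (Lim_seq (fun n => pn n (clamp L x))).
Definition ql x := real (Lim_seq (fun n => qn n (clamp L x))).

Lemma pl_lim x : 0 <= x <= L -> is_lim_seq (fun n => pn n x) (pl x).
Proof. intros Hx. unfold pl. rewrite clamp_id by auto. apply Lim_seq_correct'.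
  apply ex_finite_lim_seq_decr with 0. intros n; apply (C_all n x Hx).
  intros n; apply (A_all n x Hx). Qed.
Lemma ql_lim x : 0 <= x <= L -> is_lim_seq (fun n => qn n x) (ql x).
Proof. intros Hx. unfold ql. rewrite clamp_id by auto. apply Lim_seq_correct'.
  apply ex_finite_lim_seq_incr with 1. intros n; apply (C_all n x Hx).
  intros n; apply (A_all n x Hx). Qed.

Lemma lim_lb (u : nat -> R) (l c : R) : is_lim_seq u l -> (forall n, c <= u n) -> c <= l.
Proof. intros H Hc. pose proof (is_lim_seq_le (fun _ => c) u c l Hc (is_lim_seq_const c) H). exact H0. Qed.
Lemma lim_ub (u : nat -> R) (l c : R) : is_lim_seq u l -> (forall n, u n <= c) -> l <= c.
Proof. intros H Hc. pose proof (is_lim_seq_le u (fun _ => c) l c Hc H (is_lim_seq_const c)). exact H0. Qed.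

Lemma pl_le x n : 0 <= x <= L -> pl x <= pn n x.
Proof. intros Hx. apply (is_lim_seq_decr_compare (fun m => pn m x) (pl x)). apply pl_lim; auto. intros m; apply (C_all m x Hx). Qed.
Lemma ql_ge x n : 0 <= x <= L -> qn n x <= ql x.
Proof. intros Hx. apply (is_lim_seq_incr_compare (fun m => qn m x) (ql x)). apply ql_lim; auto. intros m; apply (C_all m x Hx). Qed.
Lemma pl_box x : 0 <= x <= L -> 0 <= pl x <= 1 /\ 0 <= ql x <= 1.
Proof. intros Hx. split; split.
  apply lim_lb with (fun n => pn n x). apply pl_lim; auto. intros n; apply (A_all n x Hx).
  apply lim_ub with (fun n => pn n x). apply pl_lim; auto. intros n; apply (A_all n x Hx).
  apply lim_lb with (fun n => qn n x). apply ql_lim; auto. intros n; apply (A_all n x Hx).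
  apply lim_ub with (fun n => qn n x). apply ql_lim; auto. intros n; apply (A_all n x Hx). Qed.
Lemma pl_bar x : 0 <= x <= L' -> phib x <= pl x /\ ql x <= psib x.
Proof. intros Hx. split.
  apply lim_lb with (fun n => pn n x). apply pl_lim; lra. intros n; apply (B_all n x Hx).
  apply lim_ub with (fun n => qn n x). apply ql_lim; lra. intros n; apply (B_all n x Hx). Qed.

Lemma lim_lip (u v : nat -> R) (l1 l2 K : R) : is_lim_seq u l1 -> is_lim_seq v l2 ->
  (forall n, Rabs (u n - v n) <= K) -> Rabs (l1 - l2) <= K.
Proof. intros H1 H2 HK. pose proof (is_lim_seq_minus' u v l1 l2 H1 H2) as H.
  apply Rabs_le. split.
  apply lim_lb with (fun n => u n - v n); auto. intros n; specialize (HK n); apply Rabs_le_between in HK; lra.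
  apply lim_ub with (fun n => u n - v n); auto. intros n; specialize (HK n); apply Rabs_le_between in HK; lra. Qed.

Lemma pl_clamp x : pl (clamp L x) = pl x.
Proof. unfold pl. rewrite (clamp_id L (clamp L x)); auto. apply clamp_in; lra. Qed.
Lemma ql_clamp x : ql (clamp L x) = ql x.
Proof. unfold ql. rewrite (clamp_id L (clamp L x)); auto. apply clamp_in; lra. Qed.

Lemma pl_lip0 x y : 0 <= x <= L -> 0 <= y <= L -> Rabs (pl x - pl y) <= C0 * Rabs (x - y).
Proof. intros. apply lim_lip with (fun n => pn n x) (fun n => pn n y). apply pl_lim; auto. apply pl_lim; auto.
  intros; apply p_lip; auto. Qed.
Lemma ql_lip0 x y : 0 <= x <= L -> 0 <= y <= L -> Rabs (ql x - ql y) <= C0 * Rabs (x - y).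
Proof. intros. apply lim_lip with (fun n => qn n x) (fun n => qn n y). apply ql_lim; auto. apply ql_lim; auto.
  intros; apply q_lip; auto. Qed.

Lemma pl_cont : cont_all pl.
Proof. apply lip_cont with C0. apply C0_nonneg. intros x y. rewrite <- (pl_clamp x), <- (pl_clamp y).
  eapply Rle_trans. apply pl_lip0; apply clamp_in; lra. apply Rmult_le_compat_l. apply C0_nonneg.
  apply clamp_lip; lra. Qed.
Lemma ql_cont : cont_all ql.
Proof. apply lip_cont with C0. apply C0_nonneg. intros x y. rewrite <- (ql_clamp x), <- (ql_clamp y).
  eapply Rle_trans. apply ql_lip0; apply clamp_in; lra. apply Rmult_le_compat_l. apply C0_nonneg.
  apply clamp_lip; lra. Qed.

Lemma p_unif eps : 0 < eps -> exists N, forall n x, (N <= n)%nat -> 0 <= x <= L -> Rabs (pn n x - pl x) <= eps.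
Proof. intros He. destruct (unif (fun n x => pn n x - pl x) L (2 * C0) HL ltac:(pose proof C0_nonneg; lra)) with eps
    as [N HN]; auto.
  - intros n x y Hx Hy. pose proof (p_lip n x y Hx Hy). pose proof (pl_lip0 x y Hx Hy).
    apply Rabs_le_between in H. apply Rabs_le_between in H0. lra.
  - intros x Hx. pose proof (is_lim_seq_minus' _ _ _ _ (pl_lim x Hx) (is_lim_seq_const (pl x))) as H.
    replace (pl x - pl x) with 0 in H by ring. exact H.
  - exists N. intros n x Hn Hx. specialize (HN n x Hn Hx). pose proof (pl_le x n Hx).
    rewrite Rabs_pos_eq; lra. Qed.
Lemma q_unif eps : 0 < eps -> exists N, forall n x, (N <= n)%nat -> 0 <= x <= L -> Rabs (qn n x - ql x) <= eps.
Proof. intros He. destruct (unif (fun n x => ql x - qn n x) L (2 * C0) HL ltac:(pose proof C0_nonneg; lra)) with eps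
    as [N HN]; auto.
  - intros n x y Hx Hy. pose proof (q_lip n x y Hx Hy). pose proof (ql_lip0 x y Hx Hy).
    apply Rabs_le_between in H. apply Rabs_le_between in H0. lra.
  - intros x Hx. pose proof (is_lim_seq_minus' _ _ _ _ (is_lim_seq_const (ql x)) (ql_lim x Hx)) as H.
    replace (ql x - ql x) with 0 in H by ring. exact H.
  - exists N. intros n x Hn Hx. specialize (HN n x Hn Hx). pose proof (ql_ge x n Hx).
    rewrite Rabs_left1; lra. Qed.

Lemma limit_T al (fn : nat -> R -> R) (fl : R -> R) (wn : nat -> R) (l x : R) :
  0 <= x <= L -> (forall n, cont_all (fn n)) -> cont_all fl ->
  (forall n, wn n = Tg kk L al (fn n) x) -> is_lim_seq wn l ->
  (forall eps, 0 < eps -> exists N, forall n z, (N <= n)%nat -> 0 <= z <= L -> Rabs (fn n z - fl z) <= eps) ->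
  l = Tg kk L al fl x.
Proof. intros Hx Hfn Hfl Hw Hl Hu.
  pose proof (shkL kk L kk_pos HL) as Hs. pose proof (e_pos kk L) as He. pose proof kk_pos. pose proof HL.
  set (Kt := 2 * (e kk L * (L * e kk L)) / (kk * sh (kk*L))).
  assert (HKt : 0 <= Kt). { unfold Kt. apply Rmult_le_pos. apply Rmult_le_pos. lra.
    apply Rmult_le_pos. lra. apply Rmult_le_pos; lra. apply Rlt_le, Rinv_0_lt_compat; nra. }
  assert (HT : is_lim_seq wn (Tg kk L al fl x)).
  { apply (proj2 (is_lim_seq_Reals wn _)). intros eps Heps.
    destruct (Hu (eps / (2 * (Kt + 1)))) as [N HN]. apply Rdiv_lt_0_compat; lra.
    exists N. intros n Hn. unfold R_dist. rewrite Hw.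
    eapply Rle_lt_trans. { apply Tg_diff; auto. }
    set (t := eps / (2 * (Kt + 1))).
    replace (2 * (e kk L * (L * (e kk L * t))) / (kk * sh (kk * L)))
      with (Kt * t) by (unfold Kt; field; split; lra). unfold t.
    apply Rmult_lt_reg_r with (2 * (Kt + 1)). lra. field_simplify; nra. }
  pose proof (is_lim_seq_unique _ _ HT). pose proof (is_lim_seq_unique _ _ Hl).
  rewrite H2 in H1. injection H1. auto. Qed.

Definition Fl x := FF (pl x) (ql x).
Definition Gl x := GG (pl x) (ql x).
Lemma KF_pos : 0 < KF. Proof. unfold KF. pose proof MM_pos. lra. Qed.

Lemma FG_unif eps : 0 < eps -> exists N, forall n z, (N <= n)%nat -> 0 <= z <= L ->
  Rabs (FF (pn n z) (qn n z) - Fl z) <= eps /\ Rabs (GG (pn n z) (qn n z) - Gl z) <= eps.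
Proof. intros He. pose proof KF_pos.
  destruct (p_unif (eps / (2*KF))) as [N1 H1]. apply Rdiv_lt_0_compat; lra.
  destruct (q_unif (eps / (2*KF))) as [N2 H2]. apply Rdiv_lt_0_compat; lra.
  exists (Nat.max N1 N2). intros n z Hn Hz.
  specialize (H1 n z ltac:(lia) Hz). specialize (H2 n z ltac:(lia) Hz).
  destruct (A_all n z Hz). destruct (pl_box z Hz).
  assert (KF * (Rabs (pn n z - pl z) + Rabs (qn n z - ql z)) <= eps).
  { apply Rle_trans with (KF * (eps / (2*KF) + eps / (2*KF))). apply Rmult_le_compat_l; lra.
    right. field. lra. }
  split. eapply Rle_trans. apply F_lip; auto. auto.
  eapply Rle_trans. apply G_lip; auto. auto. Qed.

Definition phi := Tg kk L 0 Fl.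
Definition psi := Tg kk L 1 Gl.
Lemma Fl_cont : cont_all Fl. Proof. apply cont_FF. apply pl_cont. apply ql_cont. Qed.
Lemma Gl_cont : cont_all Gl. Proof. apply cont_GG. apply pl_cont. apply ql_cont. Qed.

Lemma phi_eq x : 0 <= x <= L -> pl x = phi x.
Proof. intros Hx. apply (limit_T 0 (fun n z => FF (pn n z) (qn n z)) Fl (fun n => pn (S n) x)); auto.
  intros n. apply cont_FF; apply cont_it. apply Fl_cont.
  apply (proj1 (is_lim_seq_incr_1 (fun n => pn n x) (pl x))). apply pl_lim; auto.
  intros eps He. destruct (FG_unif eps He) as [N HN]. exists N. intros n z Hn Hz. apply (HN n z Hn Hz). Qed.
Lemma psi_eq x : 0 <= x <= L -> ql x = psi x.
Proof. intros Hx. apply (limit_T 1 (fun n z => GG (pn n z) (qn n z)) Gl (fun n => qn (S n) x)); auto.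
  intros n. apply cont_GG; apply cont_it. apply Gl_cont.
  apply (proj1 (is_lim_seq_incr_1 (fun n => qn n x) (ql x))). apply ql_lim; auto.
  intros eps He. destruct (FG_unif eps He) as [N HN]. exists N. intros n z Hn Hz. apply (HN n z Hn Hz). Qed.

Lemma good_phi : good MM phi Fl.
Proof. apply good_Tg. apply kk_pos. apply HL. apply Fl_cont. Qed.
Lemma good_psi : good MM psi Gl.
Proof. apply good_Tg. apply kk_pos. apply HL. apply Gl_cont. Qed.
Lemma good_hM : good MM (fun x => sh (kk*x) + sh (kk*(L-x))) (fun _ => 0).
Proof. apply good_h. Qed.
Lemma good_h2M : good MM (fun x => sh (kk*(L-x))) (fun _ => 0).
Proof. apply good_h2. Qed.

Lemma phi_lt1 x : 0 < x < L -> phi x < 1.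
Proof. intros Hx. pose proof MM_pos as HM. pose proof HL as HL0. pose proof (shkL kk L kk_pos HL) as Hs.
  set (ep := / sh (kk*L)).
  assert (Hep : 0 < ep) by (apply Rinv_0_lt_compat; auto).
  pose proof (compare_good MM 0 L (fun _ => 1) (fun _ => MM * 1) _ _ HM HL0 (good_const MM 1)
    (good_comb MM phi Fl _ _ ep good_phi good_hM)) as H.
  assert (Hh : 0 < sh (kk*x)) by (apply sh_pos; pose proof kk_pos; nra).
  assert (Hh' : 0 <= sh (kk*(L-x))) by (apply sh_nonneg; pose proof kk_pos; nra).
  assert (phi x + ep * (sh (kk*x) + sh (kk*(L-x))) <= 1).
  { apply H; try lra.
    - intros y Hy. destruct (pl_box y ltac:(lra)). pose proof (F_bnd _ _ H0 H1). unfold Fl. lra.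
    - unfold phi. rewrite Tg_0 by (apply kk_pos || apply HL). replace (kk*0) with 0 by ring. rewrite sh_0.
      replace (L-0) with L by ring. unfold ep. right. field. lra.
    - unfold phi. rewrite Tg_L by (apply kk_pos || apply HL). replace (kk*(L-L)) with 0 by ring. rewrite sh_0.
      unfold ep. right. field. lra. }
  assert (0 < ep * (sh (kk*x) + sh (kk*(L-x)))) by (apply Rmult_lt_0_compat; lra). lra. Qed.

Lemma psi_gt0 x : 0 < x < L -> 0 < psi x.
Proof. intros Hx. pose proof MM_pos as HM. pose proof HL as HL0. pose proof (shkL kk L kk_pos HL) as Hs.
  set (ep := / sh (kk*L)).
  assert (Hep : 0 < ep) by (apply Rinv_0_lt_compat; auto).
  pose proof (compare_good MM 0 L psi Gl _ _ HM HL0 good_psi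
    (good_comb MM (fun _ => 0) (fun _ => MM * 0) _ _ ep (good_const MM 0) good_hM)) as H.
  assert (Hh : 0 < sh (kk*x)) by (apply sh_pos; pose proof kk_pos; nra).
  assert (Hh' : 0 <= sh (kk*(L-x))) by (apply sh_nonneg; pose proof kk_pos; nra).
  assert (0 + ep * (sh (kk*x) + sh (kk*(L-x))) <= psi x).
  { apply H; try lra.
    - intros y Hy. destruct (pl_box y ltac:(lra)). pose proof (G_bnd _ _ H0 H1). unfold Gl. lra.
    - unfold psi. rewrite Tg_0 by (apply kk_pos || apply HL). replace (kk*0) with 0 by ring. rewrite sh_0.
      replace (L-0) with L by ring. unfold ep. right. field. lra.
    - unfold psi. rewrite Tg_L by (apply kk_pos || apply HL). replace (kk*(L-L)) with 0 by ring. rewrite sh_0.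
      unfold ep. right. field. lra. }
  assert (0 < ep * (sh (kk*x) + sh (kk*(L-x)))) by (apply Rmult_lt_0_compat; lra). lra. Qed.

Lemma phi_gt0 x : 0 < x < L -> 0 < phi x.
Proof. intros Hx. pose proof MM_pos as HM. pose proof kk_pos as Hk.
  destruct Hlow as [_ [Hi [H0 [H1 [H2 H3]]]]].
  destruct (Rlt_or_le x L') as [Hlt|Hge].
  - rewrite <- phi_eq by lra. destruct (pl_bar x ltac:(lra)). destruct (Hi x ltac:(lra)) as [_ [_ [_ [_ [_ [_ [? ?]]]]]]]. lra.
  - set (c := L'/2).
    assert (Hpc : 0 < phi c).
    { rewrite <- phi_eq by (unfold c; lra). destruct (pl_bar c ltac:(unfold c; lra)).
      destruct (Hi c ltac:(unfold c; lra)) as [_ [_ [_ [_ [_ [_ [? ?]]]]]]]. lra. }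
    assert (Hsc : 0 < sh (kk*(L-c))) by (apply sh_pos; unfold c; nra).
    set (ep := phi c / sh (kk*(L-c))).
    assert (Hep : 0 < ep) by (apply Rdiv_lt_0_compat; auto).
    pose proof (compare_good MM c L phi Fl _ _ HM ltac:(unfold c; lra) good_phi
      (good_comb MM (fun _ => 0) (fun _ => MM * 0) _ _ ep (good_const MM 0) good_h2M)) as H.
    assert (Hh : 0 < sh (kk*(L-x))) by (apply sh_pos; nra).
    assert (0 + ep * sh (kk*(L-x)) <= phi x).
    { apply H; try (unfold c; lra).
      - intros y Hy. assert (0 <= y <= L) by (unfold c in Hy; lra).
        destruct (pl_box y H4). pose proof (F_bnd _ _ H5 H6). unfold Fl. lra.
      - unfold ep. right. field. lra.
      - unfold phi. rewrite Tg_L by (apply kk_pos || apply HL). replace (kk*(L-L)) with 0 by ring.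
        rewrite sh_0. lra. }
    assert (0 < ep * sh (kk*(L-x))) by (apply Rmult_lt_0_compat; lra). lra. Qed.

Lemma psi_lt1 x : 0 < x < L -> psi x < 1.
Proof. intros Hx. pose proof MM_pos as HM. pose proof kk_pos as Hk.
  destruct Hlow as [_ [Hi [H0 [H1 [H2 H3]]]]].
  destruct (Rlt_or_le x L') as [Hlt|Hge].
  - rewrite <- psi_eq by lra. destruct (pl_bar x ltac:(lra)). destruct (Hi x ltac:(lra)) as [_ [_ [_ [_ [_ [_ [? ?]]]]]]]. lra.
  - set (c := L'/2).
    assert (Hpc : psi c < 1).
    { rewrite <- psi_eq by (unfold c; lra). destruct (pl_bar c ltac:(unfold c; lra)).
      destruct (Hi c ltac:(unfold c; lra)) as [_ [_ [_ [_ [_ [_ [? ?]]]]]]]. lra. }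
    assert (Hsc : 0 < sh (kk*(L-c))) by (apply sh_pos; unfold c; nra).
    set (ep := (1 - psi c) / sh (kk*(L-c))).
    assert (Hep : 0 < ep) by (apply Rdiv_lt_0_compat; lra).
    pose proof (compare_good MM c L (fun _ => 1) (fun _ => MM * 1) _ _ HM ltac:(unfold c; lra) (good_const MM 1)
      (good_comb MM psi Gl _ _ ep good_psi good_h2M)) as H.
    assert (Hh : 0 < sh (kk*(L-x))) by (apply sh_pos; nra).
    assert (psi x + ep * sh (kk*(L-x)) <= 1).
    { apply H; try (unfold c; lra).
      - intros y Hy. assert (0 <= y <= L) by (unfold c in Hy; lra).
        destruct (pl_box y H4). pose proof (G_bnd _ _ H5 H6). unfold Gl. lra.
      - unfold ep. right. field. lra.
      - unfold psi. rewrite Tg_L by (apply kk_pos || apply HL). replace (kk*(L-L)) with 0 by ring.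
        rewrite sh_0. lra. }
    assert (0 < ep * sh (kk*(L-x))) by (apply Rmult_lt_0_compat; lra). lra. Qed.

Lemma barrier_main : is_barrier a b L phi psi.
Proof. unfold is_barrier. split.
  { intros x Hx. split; apply cont_closed_of. apply Tg_cont. apply kk_pos. apply HL. apply Fl_cont.
    apply Tg_cont. apply kk_pos. apply HL. apply Gl_cont. }
  split.
  { intros x Hx. destruct (good_phi x) as [P1 P2]. destruct (good_psi x) as [Q1 Q2].
    split. eexists; exact P1. split. eexists; exact P2. split. eexists; exact Q1. split. eexists; exact Q2.
    split. rewrite (is_derive_unique _ _ _ P2). unfold Fl, FF. rewrite <- (phi_eq x), <- (psi_eq x) by lra. ring.
    split. rewrite (is_derive_unique _ _ _ Q2). unfold Gl, GG. rewrite <- (phi_eq x), <- (psi_eq x) by lra. ring.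
    split; split. apply phi_gt0; auto. apply phi_lt1; auto. apply psi_gt0; auto. apply psi_lt1; auto. }
  unfold phi, psi. rewrite !Tg_0, !Tg_L; try apply kk_pos; try apply HL. auto.
Qed.

Lemma main_exists : barrier_exists a b L.
Proof. exists phi, psi. apply barrier_main. Qed.

End Main.

Theorem proposition1 (abar bbar Lbar : R) :
  0 < abar -> Rmax abar 1 < bbar -> 0 < Lbar ->
  barrier_exists abar bbar Lbar ->
  (forall L : R, Lbar <= L -> barrier_exists abar bbar L) /\
  (forall b : R, bbar <= b -> barrier_exists abar b Lbar) /\
  (forall a : R, 0 < a -> a <= abar -> barrier_exists a bbar Lbar).
Proof.
  intros Ha Hb HL [phi0 [psi0 [Hc [Hi [H0 [H1 [H2 H3]]]]]]].
  assert (Hb0 : 0 < bbar) by (pose proof (Rmax_r abar 1); lra).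
  split; [|split].
  - intros L HLL. apply (main_exists abar bbar L Lbar phi0 psi0); auto.
    split; auto. split; auto. intros x Hx.
    destruct (Hi x Hx) as [D1 [D2 [D3 [D4 [E1 [E2 [B1 B2]]]]]]].
    repeat split; auto; lra.
  - intros b Hbb. apply (main_exists abar b Lbar Lbar phi0 psi0); auto. lra. lra.
    split; auto. split; auto. intros x Hx.
    destruct (Hi x Hx) as [D1 [D2 [D3 [D4 [E1 [E2 [B1 B2]]]]]]].
    repeat split; auto; try lra.
    assert (0 <= psi0 x * phi0 x * (b - bbar)) by (apply Rmult_le_pos; nra). nra.
  - intros a Ha0 Haa. apply (main_exists a bbar Lbar Lbar phi0 psi0); auto. lra.
    split; auto. split; auto. intros x Hx.
    destruct (Hi x Hx) as [D1 [D2 [D3 [D4 [E1 [E2 [B1 B2]]]]]]].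
    repeat split; auto; try lra.
    assert (0 <= phi0 x * psi0 x * (abar - a)) by (apply Rmult_le_pos; nra). nra.
Qed.
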